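(* With $\mathsf{M}$, $\widehat{\mathsf{M}}$, $\mathbb{F}$, $\mathsf{2}$ and $g\colon\mathsf{M}\to\mathsf{2}^{\mathbb{N}\times\mathbb{F}}$ as in the context, the function $e_{\mathsf{M}}\colon\mathsf{M}\to\widehat{\mathsf{M}}\times\mathsf{2}^{\mathbb{N}\times\mathbb{F}}$, $e_{\mathsf{M}}(x)=(x,g(x))$, is injective and continuous.
   Context: $M_i = \{ j\cdot 2^{-i} \mid j \in \{0,\dots,2^i\}\}$; $\widehat{\mathsf{M}}=\prod_i\mathsf{M}_i$ with each $\mathsf{M}_i$ the discrete space on $M_i$; $\mathsf{M}$ is the subspace of $\ell_1$ (real sequences with finite $1$-norm, metric $\|x-y\|_1$) with underlying set $\{x\in\prod_i M_i:\sum_i|x(i)|<\infty\}$. The countable fan $\mathbb{F}$ is $\mathbb{N}^2\cup\{(\infty,\infty)\}$ with metric $d((a,b),(\infty,\infty))=2^{-a}$, $d((a,b),(a',b'))=\max\{2^{-a},2^{-a'}\}$ for distinct points of $\mathbb{N}^2$. $\mathsf{2}=\{\mathtt{0},\mathtt{1}\}$ is discrete. $f(x,k,a,b)=\mathtt{0}$ if $\sum_{i=a}^{a+b}x(i)\le 2^{-k}$, else $\mathtt{1}$; $g(y)(k,a,b)=f(y,k,a,b)$ and $g(y)(k,\infty,\infty)=\mathtt{0}$. Products and exponentials are formed in the category QCB (products: sequentialisation of product topology; exponentials: continuous maps with the sequentialisation of the compact-open topology). *)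

(* Defs.v *)
From HB Require Import structures.
From mathcomp Require Import all_boot all_order all_algebra.
From mathcomp Require Import all_classical all_reals all_analysis.
Import Order.TTheory GRing.Theory Num.Theory.
Unset Printing Implicit Defensive.
Local Open Scope classical_set_scope.
Local Open Scope ring_scope.

Definition topo (T : Type) := set (set T).

Definition cont {S T : Type} (tS : topo S) (tT : topo T) (f : S -> T) : Prop :=
  forall V, tT V -> tS (f @^-1` V).

Definition discrete (T : Type) : topo T := setT.

Definition seq_conv {T : Type} (t : topo T) (s : nat -> T) (x : T) : Prop :=
  forall U, t U -> U x -> exists N, forall n, (N <= n)%N -> U (s n).

Definition seqz {T : Type} (t : topo T) : topo T :=
  [set U | forall (s : nat -> T) (x : T), seq_conv t s x -> U x ->
     exists N, forall n, (N <= n)%N -> U (s n)].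

Definition gen_topo {T : Type} (B : set (set T)) : topo T :=
  [set U | forall x, U x -> exists F : set (set T),
     [/\ finite_set F, F `<=` B, (forall V, F V -> V x) &
         (forall y, (forall V, F V -> V y) -> U y)]].

Definition prod_topo {S T : Type} (tS : topo S) (tT : topo T) : topo (S * T) :=
  [set W | forall p, W p -> exists U V,
     [/\ tS U, tT V, U p.1, V p.2 & (forall q, U q.1 -> V q.2 -> W q)]].

Definition metric_topo {R : realType} {T : Type} (d : T -> T -> R) : topo T :=
  [set U | forall x, U x -> exists e : R, 0 < e /\ forall y, d x y < e -> U y].

Definition compact_in {T : Type} (t : topo T) (K : set T) : Prop :=
  forall C : set (set T), C `<=` t -> K `<=` \bigcup_(U in C) U ->
    exists D : set (set T), [/\ D `<=` C, finite_set D & K `<=` \bigcup_(U in D) U].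

(** * QCB exponential: continuous maps with the sequentialised compact-open topology *)
Definition CX {X Y : Type} (tX : topo X) (tY : topo Y) :=
  {h : X -> Y | cont tX tY h}.

Definition co_subbasis {X Y : Type} (tX : topo X) (tY : topo Y) : set (set (CX tX tY)) :=
  [set W | exists K U, [/\ compact_in tX K, tY U &
     W = [set h : CX tX tY | forall x, K x -> U (proj1_sig h x)]]].

Definition exp_topo {X Y : Type} (tX : topo X) (tY : topo Y) : topo (CX tX tY) :=
  seqz (gen_topo (co_subbasis tX tY)).

Definition qcb_prod {S T : Type} (tS : topo S) (tT : topo T) : topo (S * T) :=
  seqz (prod_topo tS tT).

(** * The countable fan F = N^2 ∪ {(∞,∞)}; [None] is (∞,∞). *)
Definition Fan := option (nat * nat).

Definition dF {R : realType} (p q : Fan) : R :=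
  match p, q with
  | None, None => 0
  | Some (a, _), None => (2%:R : R) ^- a
  | None, Some (a, _) => (2%:R : R) ^- a
  | Some (a, b), Some (a', b') =>
      if (a, b) == (a', b') then 0 else Num.max ((2%:R : R) ^- a) ((2%:R : R) ^- a')
  end.

Definition Fan_topo (R : realType) : topo Fan := metric_topo (@dF R).

Definition NF_topo (R : realType) : topo (nat * Fan) :=
  qcb_prod (discrete nat) (Fan_topo R).

(** 2 = {0,1} discrete, encoded as bool with 0 = false, 1 = true *)
Definition two_topo : topo bool := discrete bool.

Definition inMi {R : realType} (i : nat) (r : R) : Prop :=
  exists j : nat, (j <= 2 ^ i)%N /\ r = j%:R / (2%:R : R) ^+ i.

Definition l1norm {R : realType} (x : nat -> R) : \bar R :=
  (\sum_(0 <= i <oo) (`|x i|)%:E)%E.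

Definition Mset {R : realType} (x : nat -> R) : Prop :=
  (forall i, inMi i (x i)) /\ (l1norm x < +oo)%E.

Definition Mt (R : realType) := {x : nat -> R | Mset x}.

Definition dM {R : realType} (x y : Mt R) : R :=
  fine (l1norm (fun i => proj1_sig x i - proj1_sig y i)).

Definition M_topo (R : realType) : topo (Mt R) := metric_topo (@dM R).

Definition Mhat (R : realType) := {x : nat -> R | forall i, inMi i (x i)}.

(** Tychonoff product of the discrete spaces M_i: subbasis = preimages under
    coordinate projections of (arbitrary) subsets of M_i *)
Definition Mhat_tych (R : realType) : topo (Mhat R) :=
  gen_topo [set W | exists (i : nat) (A : set R),
                      W = [set y : Mhat R | A (proj1_sig y i)]].

(** QCB countable product = sequentialisation of the Tychonoff product *)
Definition Mhat_topo (R : realType) : topo (Mhat R) := seqz (Mhat_tych R).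

Definition toMhat {R : realType} (x : Mt R) : Mhat R :=
  exist _ (proj1_sig x) (proj1 (proj2_sig x)).

Definition fM {R : realType} (x : nat -> R) (k a b : nat) : bool :=
  ~~ (\sum_(a <= i < (a + b).+1) x i <= (2%:R : R) ^- k).

Definition gM {R : realType} (y : Mt R) : nat * Fan -> bool :=
  fun p => match p.2 with
           | Some (a, b) => fM (proj1_sig y) p.1 a b
           | None => false
           end.

(* Main.v *)
Require Import Defs.
From HB Require Import structures.
From mathcomp Require Import all_boot all_order all_algebra.
From mathcomp Require Import all_classical all_reals all_analysis.
From mathcomp Require Import ring lra.
Import Order.TTheory GRing.Theory Num.Theory.
Local Open Scope classical_set_scope.
Local Open Scope ring_scope.

Definition ev (P : nat -> Prop) := exists N, forall n, (N <= n)%N -> P n.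

Lemma ev_fin (X : Type) (F : set (set X)) (P : set X -> nat -> Prop) :
  finite_set F -> (forall V, F V -> ev (P V)) ->
  ev (fun n => forall V, F V -> P V n).
Proof.
move=> /finite_seqP [s ->]; elim: s => [|V s IH] H.
  by exists 0%N => n _ V /=; rewrite in_nil.
have [N1 H1] := H V (mem_head _ _).
have [N2 H2] : ev (fun n => forall V, [set` s] V -> P V n).
  by apply: IH => W /= Ws; apply: H; rewrite /= inE Ws orbT.
exists (maxn N1 N2) => n Hn W /=; rewrite inE => /orP[/eqP->|Ws].
  by apply: H1; apply: leq_trans Hn; rewrite leq_maxl.
by apply: H2 => //; apply: leq_trans Hn; rewrite leq_maxr.
Qed.

Lemma seqz_open {T} (t : topo T) U : t U -> seqz t U.
Proof. by move=> tU s x sx Ux; exact: sx U tU Ux. Qed.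

Lemma seq_conv_seqz {T} (t : topo T) s x : seq_conv t s x -> seq_conv (seqz t) s x.
Proof. by move=> sx U sU Ux; exact: sU s x sx Ux. Qed.

Lemma seq_conv_prod {S T} (tS : topo S) (tT : topo T) (s : nat -> S * T) a b :
  seq_conv tS (fun n => (s n).1) a -> seq_conv tT (fun n => (s n).2) b ->
  seq_conv (prod_topo tS tT) s (a, b).
Proof.
move=> ha hb W hW Wab; have [U [V [tU tV Ua Vb HW]]] := hW (a, b) Wab.
have [N1 H1] := ha U tU Ua; have [N2 H2] := hb V tV Vb.
exists (maxn N1 N2) => n Hn; apply: HW.
  by apply: H1; apply: leq_trans Hn; rewrite leq_maxl.
by apply: H2; apply: leq_trans Hn; rewrite leq_maxr.
Qed.

Lemma seq_conv_gen {T} (B : set (set T)) s x :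
  (forall V, B V -> V x -> ev (fun n => V (s n))) -> seq_conv (gen_topo B) s x.
Proof.
move=> H U hU Ux; have [F [fF FB Fx FU]] := hU x Ux.
have [N HN] := @ev_fin _ F (fun V n => V (s n)) fF
  (fun V FV => H V (FB V FV) (Fx V FV)).
by exists N => n Hn; apply: FU; exact: HN.
Qed.

Section Main.
Variable R : realType.

Lemma pow2V_le m n : (m <= n)%N -> (2%:R : R) ^- n <= 2%:R ^- m.
Proof.
move=> h; rewrite lef_pV2 ?posrE ?exprn_gt0 ?ltr0n //.
by rewrite ler_eXn2l // ltr1n.
Qed.

Lemma pow2V_gt0 n : 0 < (2%:R : R) ^- n.
Proof. by rewrite invr_gt0 exprn_gt0 // ltr0n. Qed.

Lemma pow2V_half k : (2%:R : R) ^- k.+1 + 2%:R ^- k.+1 = 2%:R ^- k.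
Proof.
have h : (2%:R : R) ^+ k != 0 by rewrite expf_neq0 // pnatr_eq0.
rewrite exprS invfM; field; rewrite ?h ?pnatr_eq0 //=.
Qed.

Lemma inMi_ge0 i (r : R) : inMi i r -> 0 <= r.
Proof. by case=> j [_ ->]; rewrite divr_ge0 // exprn_ge0 // ler0n. Qed.

Lemma inMi_eq i (u v : R) : inMi i u -> inMi i v -> `|u - v| < 2%:R ^- i -> u = v.
Proof.
move=> [j [_ ->]] [j' [_ ->]].
have p0 : 0 < (2%:R : R) ^+ i by rewrite exprn_gt0 // ltr0n.
rewrite -mulrBl normrM (@gtr0_norm _ ((2%:R : R) ^+ i)^-1); last by rewrite invr_gt0.
rewrite -[X in _ < X]mul1r.
rewrite ltr_pM2r ?invr_gt0 // ltr_norml => /andP[h1 h2].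
case: (ltngtP j j') => [hj|hj|->//].
  have : (j.+1%:R : R) <= j'%:R by rewrite ler_nat.
  rewrite -natr1; lra.
have : (j'.+1%:R : R) <= j%:R by rewrite ler_nat.
rewrite -natr1; lra.
Qed.


Lemma Mt_ge0 (x : Mt R) i : 0 <= proj1_sig x i.
Proof. exact: inMi_ge0 ((proj1 (proj2_sig x)) i). Qed.

Lemma sum_sub_le (u : nat -> R) a k : (forall i, 0 <= u i) ->
  \sum_(a <= i < k) u i <= \sum_(0 <= i < k) u i.
Proof.
move=> u0; case: (leqP a k) => h.
  rewrite (big_cat_nat (leq0n a) h) /= lerDr; exact: sumr_ge0.
rewrite big_geq ?(ltnW h) //; exact: sumr_ge0.
Qed.

Lemma l1_fin (x y : Mt R) :
  l1norm (fun i => proj1_sig x i - proj1_sig y i) \is a fin_num.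
Proof.
rewrite ge0_fin_numE; last by apply: nneseries_ge0 => n _ _; rewrite lee_fin.
apply: (@le_lt_trans _ _ (l1norm (proj1_sig x) + l1norm (proj1_sig y))%E).
  rewrite /l1norm -nneseriesD; last 2 first.
  - by move=> *; rewrite lee_fin.
  - by move=> *; rewrite lee_fin.
  apply: lee_nneseries => [*|n _]; first by rewrite lee_fin.
  by rewrite -EFinD lee_fin ler_normB.
apply: lte_add_pinfty; [exact: (proj2 (proj2_sig x)) | exact: (proj2 (proj2_sig y))].
Qed.

Lemma partial_le_dM (x y : Mt R) a k :
  \sum_(a <= i < k) `|proj1_sig x i - proj1_sig y i| <= dM x y.
Proof.
apply: le_trans (sum_sub_le _ _ _ _) _ => //.
rewrite /dM -lee_fin fineK ?l1_fin // -sumEFin.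
by apply: nneseries_lim_ge => *; rewrite lee_fin.
Qed.

Lemma coord_le_dM (x y : Mt R) i :
  `|proj1_sig x i - proj1_sig y i| <= dM x y.
Proof. by have := partial_le_dM x y i i.+1; rewrite big_nat1. Qed.

Lemma tail_small (x : Mt R) e : 0 < e ->
  exists A, forall a k, (A <= a)%N -> \sum_(a <= i < k) proj1_sig x i <= e.
Proof.
move=> e0.
have h := @nneseries_tail_cvg R (fun i => (`|proj1_sig x i|)%:E) xpredT
  (proj2 (proj2_sig x)) (fun k _ => ltac:(by rewrite lee_fin)).
have /fine_cvgP [[N1 _ H1] H2] := h.
have [N2 _ H3] := @cvgr_lt _ _ _ _ _ 0 H2 e e0.
exists (maxn N1 N2) => a k Ha.
have fa := H1 a (leq_trans (leq_maxl _ _) Ha).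
have ea := H3 a (leq_trans (leq_maxr _ _) Ha).
rewrite (_ : \sum_(a <= i < k) proj1_sig x i =
    \sum_(a <= i < k) `|proj1_sig x i|); last first.
  by apply: eq_bigr => i _; rewrite ger0_norm // Mt_ge0.
rewrite -lee_fin -sumEFin.
apply: le_trans (nneseries_lim_ge _ _) _; first by move=> *; rewrite lee_fin.
rewrite -(fineK fa) lee_fin; exact: ltW ea.
Qed.


Lemma single_ball a b (y : Fan) : @dF R (Some (a, b)) y < 2%:R ^- a -> y = Some (a, b).
Proof.
case: y => [[a' b']|] /=; last by rewrite ltxx.
by case: eqP => [->//| _]; rewrite gt_max ltxx.
Qed.

Lemma single_open a b : Fan_topo R [set Some (a, b)].
Proof.
move=> q -> ; exists (2%:R ^- a); split; first exact: pow2V_gt0.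
by move=> y /single_ball.
Qed.

Definition NoneNb (A : nat) : set Fan :=
  fun q => match q with None => True | Some (a, _) => (A < a)%N end.

Lemma NoneNb_open A : Fan_topo R (NoneNb A).
Proof.
move=> [[a b]|] /= h.
  exists (2%:R ^- a); split; first exact: pow2V_gt0.
  by move=> y /single_ball ->.
exists (2%:R ^- A); split; first exact: pow2V_gt0.
case=> [[a b]|] //= h'; rewrite ltnNge; apply/negP => ha.
by have := pow2V_le _ _ ha; rewrite leNgt h'.
Qed.

Lemma gM_loc (y : Mt R) k q : exists V, Fan_topo R V /\ V q /\
  forall q', V q' -> gM y (k, q') = gM y (k, q).
Proof.
case: q => [[a b]|].
  exists [set Some (a, b)]; split; first exact: single_open.
  by split => // q' ->.
have [A HA] := @tail_small y _ (pow2V_gt0 k).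
exists (NoneNb A); split; first exact: NoneNb_open.
split => //; case=> [[a b]|] //= ha.
by rewrite /gM /= /fM HA // ltnW.
Qed.

Lemma gM_cont (y : Mt R) : cont (NF_topo R) two_topo (gM y).
Proof.
move=> V _; apply: seqz_open => [[k q]] /= Vp.
have [W [oW [Wq HW]]] := gM_loc y k q.
exists [set k], W; split => //=.
by move=> [k' q'] /= -> Wq'; rewrite (HW _ Wq').
Qed.


Section Conv.
Variables (x : Mt R) (ys : nat -> Mt R).
Hypothesis Hd : forall n, dM x (ys n) < 2%:R ^- n.

Lemma E1 m : ev (fun n => forall i, (i <= m)%N ->
  proj1_sig (ys n) i = proj1_sig x i).
Proof.
exists m => n hn i hi; apply/esym/(@inMi_eq i).
- exact: (proj1 (proj2_sig x)) i.
- exact: (proj1 (proj2_sig (ys n))) i.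
apply: le_lt_trans (coord_le_dM x (ys n) i) _.
apply: lt_le_trans (Hd n) _; apply: pow2V_le; exact: leq_trans hi hn.
Qed.

Lemma gM_conv_loc k q : exists V, Fan_topo R V /\ V q /\
  ev (fun n => forall q', V q' -> gM (ys n) (k, q') = gM x (k, q')).
Proof.
case: q => [[a b]|].
  exists [set Some (a, b)]; split; first exact: single_open.
  split => //; have [N HN] := E1 (a + b).
  exists N => n hn q' ->; rewrite /gM /= /fM; congr (~~ (_ <= _)).
  by apply: eq_big_nat => i /andP[_ hi]; apply: HN.
have [A HA] := @tail_small x _ (pow2V_gt0 k.+1).
exists (NoneNb A); split; first exact: NoneNb_open.
split => //; exists k.+1 => n hn [[a b]|] //= ha.
rewrite /gM /= /fM.
have hx := HA a (a + b).+1 (ltnW ha).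
have hk := pow2V_le _ _ (leqnSn k).
have hd : dM x (ys n) < 2%:R ^- k.+1 := lt_le_trans (Hd n) (pow2V_le _ _ hn).
have hp := partial_le_dM x (ys n) a (a + b).+1.
have hs : \sum_(a <= i < (a + b).+1) (proj1_sig (ys n) i - proj1_sig x i) <=
    \sum_(a <= i < (a + b).+1) `|proj1_sig x i - proj1_sig (ys n) i|.
  by apply: ler_sum => i _; rewrite distrC ler_norm.
rewrite sumrB in hs.
have h2 := pow2V_half k.
have -> : \sum_(a <= i < (a + b).+1) proj1_sig x i <= 2%:R ^- k.
  exact: le_trans hx hk.
have -> // : \sum_(a <= i < (a + b).+1) proj1_sig (ys n) i <= 2%:R ^- k.
move: hs hp hd hx h2.
set Sy := \sum_(_ <= _ < _) proj1_sig (ys n) _.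
set Sx := \sum_(_ <= _ < _) proj1_sig x _.
set Sd := \sum_(_ <= _ < _) _.
move=> *; lra.
Qed.

Lemma conv_Mhat : seq_conv (Mhat_tych R) (fun n => toMhat (ys n)) (toMhat x).
Proof.
apply: seq_conv_gen => V [i [A ->]] /= Ax.
have [N HN] := E1 i; exists N => n hn /=; rewrite HN //.
Qed.

Lemma conv_exp : seq_conv (gen_topo (co_subbasis (NF_topo R) two_topo))
  (fun n => exist _ (gM (ys n)) (gM_cont (ys n)) : CX _ _)
  (exist _ (gM x) (gM_cont x)).
Proof.
apply: seq_conv_gen => W [K [U [cK tU ->]]] /= Wx.
pose C := [set Ob : set (nat * Fan) | NF_topo R Ob /\
  ev (fun n => forall w, Ob w -> gM (ys n) w = gM x w)].
have cov : K `<=` \bigcup_(Ob in C) Ob.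
  move=> [k q] _; have [V [oV [Vq [N HN]]]] := gM_conv_loc k q.
  exists [set w | w.1 = k /\ V w.2]; last by split.
  split.
    apply: seqz_open => [[k' q']] /= [-> Vq'].
    exists [set k], V; split => //=.
  by exists N => n hn [k' q'] /= [-> Vq']; exact: HN.
have [D [DC fD KD]] := cK C (fun Ob CO => proj1 CO) cov.
have [N HN] := @ev_fin _ D (fun Ob n => forall w, Ob w -> gM (ys n) w = gM x w)
  fD (fun Ob DO => proj2 (DC Ob DO)).
exists N => n hn z Kz; have [Ob DO Oz] := KD z Kz.
rewrite (HN n hn Ob DO z Oz); exact: Wx.
Qed.

End Conv.

End Main.

Theorem lemma3p3 (R : realType) :
  exists hg : forall y : Mt R, cont (NF_topo R) two_topo (gM y),
    let eM := fun y : Mt R =>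
      (toMhat y, (exist _ (gM y) (hg y) : CX (NF_topo R) two_topo)) in
    injective eM /\
    cont (M_topo R) (qcb_prod (Mhat_topo R) (exp_topo (NF_topo R) two_topo)) eM.
Proof.
exists (@gM_cont R); cbv zeta; split.
  move=> [x1 h1] [x2 h2] [E _].
  subst x2.
  by congr exist; exact: Prop_irrelevance.
move=> W hW x Px.
case: (pselect (exists e : R, 0 < e /\ forall y, dM x y < e ->
  ((fun y : Mt R => (toMhat y, (exist _ (gM y) (@gM_cont R y) : CX (NF_topo R) two_topo))) @^-1` W) y)) => // Hno.
exfalso.
have Hn : forall n, exists y : Mt R, dM x y < 2%:R ^- n /\
    ~ W (toMhat y, (exist _ (gM y) (@gM_cont R y) : CX (NF_topo R) two_topo)).
  move=> n; apply: contrapT => hn; apply: Hno.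
  exists (2%:R ^- n); split; first exact: pow2V_gt0.
  move=> y hy; apply: contrapT => nWy; apply: hn; exists y; split => //.
have [ys Hys] := choice Hn.
have Hd : forall n, dM x (ys n) < 2%:R ^- n by move=> n; case: (Hys n).
have hc : seq_conv (prod_topo (Mhat_topo R) (exp_topo (NF_topo R) two_topo))
  (fun n => (toMhat (ys n),
    (exist _ (gM (ys n)) (@gM_cont R (ys n)) : CX (NF_topo R) two_topo)))
  (toMhat x, (exist _ (gM x) (@gM_cont R x) : CX (NF_topo R) two_topo)).
  apply: seq_conv_prod.
    exact (@seq_conv_seqz _ _ _ _ (@conv_Mhat R x ys Hd)).
  exact (@seq_conv_seqz _ _ _ _ (@conv_exp R x ys Hd)).
have [N HN] := hW _ _ hc Px.
by case: (Hys N) => _; apply; apply: HN.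
Qed.
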